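(* In the model below, let $(\mathbf A^\dagger,\mathbf q^\dagger)$ be any maximizer of $\Omega$ over $\mathcal A\times\mathbb R^n_{\ge0}$ and $\mathbf x^\dagger=\mathbf A^\dagger\mathbf q^\dagger$. Then: (i) If $r(\boldsymbol\gamma)\le1\le R(\boldsymbol\gamma)$, then $\mathbf q^\dagger=\boldsymbol\gamma$ and $\mathbf x^\dagger=\boldsymbol\beta$; moreover, unless there exists $\boldsymbol\sigma\in\{-1,1\}^n$ with $\boldsymbol\sigma^\top\boldsymbol\gamma=1$, every such $\mathbf A^\dagger$ has $\operatorname{rank}(\mathbf A^\dagger)\ge2$. (ii) If $R(\boldsymbol\gamma)\le1$, then $q_i^\dagger=\gamma_i+\dfrac{\alpha(1-R(\boldsymbol\gamma))}{1+n\alpha}$ for all $i$, $\mathbf x^\dagger=R(\mathbf q^\dagger)\boldsymbol\beta$, and $\mathbf A^\dagger$ is unique with $\mathbf a_i^\dagger=\boldsymbol\beta$ for all $i$. (iii) If $r(\boldsymbol\gamma)\ge1$ and $i$ is the index with $\gamma_i=\|\boldsymbol\gamma\|_\infty$, then $q_i^\dagger=\gamma_i-\dfrac{\alpha(r(\boldsymbol\gamma)-1)}{1+n\alpha}$ and $q_j^\dagger=\gamma_j+\dfrac{\alpha(r(\boldsymbol\gamma)-1)}{1+n\alpha}$ for all $j\ne i$, $\mathbf x^\dagger=r(\mathbf q^\dagger)\boldsymbol\beta$, and $\mathbf A^\dagger$ is unique with $\mathbf a_i^\dagger=\boldsymbol\beta$ and $\mathbf a_j^\dagger=-\boldsymbol\beta$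 for all $j\ne i$.
   Context: Model: integers $n\ge2$, $m\ge2$; parameters $\alpha>0$, $\boldsymbol\beta\in\mathbb R^m$ with $\|\boldsymbol\beta\|_2=1$, $\boldsymbol\gamma\in\mathbb R^n$ with $\gamma_i>0$ for all $i$. $\mathcal A$ is the set of real $m\times n$ matrices $\mathbf A=[\mathbf a_1,\dots,\mathbf a_n]$ with $\|\mathbf a_i\|_2=1$ for all $i$. With $\mathbf x=\mathbf A\mathbf q$, total surplus is $\Omega(\mathbf A,\mathbf q)=\alpha(\mathbf x^\top\boldsymbol\beta-\tfrac12\mathbf x^\top\mathbf x)+\mathbf q^\top\boldsymbol\gamma-\tfrac12\mathbf q^\top\mathbf q$. For $\mathbf v\in\mathbb R^n$: $R(\mathbf v)=\|\mathbf v\|_1$, $r(\mathbf v)=2\|\mathbf v\|_\infty-\|\mathbf v\|_1$. *)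

(* Defs.v *)
From HB Require Import structures.
From mathcomp Require Import all_boot all_order all_algebra.
From mathcomp Require Import reals.
Set Implicit Arguments. Unset Strict Implicit. Unset Printing Implicit Defensive.
Import Order.TTheory GRing.Theory Num.Theory.
Local Open Scope ring_scope.

Section Defs.
Variable R : realType.

Definition dotv (k : nat) (u v : 'cV[R]_k) : R := \sum_(i < k) u i 0 * v i 0.

Definition norm2 (k : nat) (v : 'cV[R]_k) : R := Num.sqrt (dotv v v).

Definition norm1 (k : nat) (v : 'cV[R]_k) : R := \sum_(i < k) `|v i 0|.

Definition norminf (k : nat) (v : 'cV[R]_k) : R := \big[Num.max/0]_(i < k) `|v i 0|.

Definition Rfun (k : nat) (v : 'cV[R]_k) : R := norm1 v.
Definition rfun (k : nat) (v : 'cV[R]_k) : R := 2 * norminf v - norm1 v.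

Definition inAset (m n : nat) (A : 'M[R]_(m, n)) : Prop :=
  forall i : 'I_n, norm2 (col i A) = 1.

Definition Omega (m n : nat) (alpha : R) (beta : 'cV[R]_m) (gamma : 'cV[R]_n)
  (A : 'M[R]_(m, n)) (q : 'cV[R]_n) : R :=
  let x := A *m q in
  alpha * (dotv x beta - 2^-1 * dotv x x) + dotv q gamma - 2^-1 * dotv q q.

Definition nonneg_vec (n : nat) (q : 'cV[R]_n) : Prop := forall i, 0 <= q i 0.

Definition is_maximizer (m n : nat) (alpha : R) (beta : 'cV[R]_m) (gamma : 'cV[R]_n)
  (A : 'M[R]_(m, n)) (q : 'cV[R]_n) : Prop :=
  [/\ inAset A, nonneg_vec q &
      forall (A' : 'M[R]_(m, n)) (q' : 'cV[R]_n), inAset A' -> nonneg_vec q' ->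
        Omega alpha beta gamma A' q' <= Omega alpha beta gamma A q].

End Defs.

(* Main.v *)
Require Import Defs.
From HB Require Import structures.
From mathcomp Require Import all_boot all_order all_algebra.
From mathcomp Require Import reals ring lra.
Import Order.TTheory GRing.Theory Num.Theory.
Local Open Scope ring_scope.

Set Implicit Arguments. Unset Strict Implicit.
Section Basics.
Variable R : realType.
Implicit Types (k : nat).

Lemma dotvC k (u v : 'cV[R]_k) : dotv u v = dotv v u.
Proof. by apply: eq_bigr => i _; rewrite mulrC. Qed.

Lemma dotvDl k (u v w : 'cV[R]_k) : dotv (u + v) w = dotv u w + dotv v w.
Proof. by rewrite /dotv -big_split; apply: eq_bigr => i _; rewrite !mxE mulrDl. Qed.

Lemma dotvZl k a (u w : 'cV[R]_k) : dotv (a *: u) w = a * dotv u w.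
Proof. by rewrite /dotv mulr_sumr; apply: eq_bigr => i _; rewrite !mxE mulrA. Qed.

Lemma dotvNl k (u w : 'cV[R]_k) : dotv (- u) w = - dotv u w.
Proof. by rewrite -scaleN1r dotvZl mulN1r. Qed.

Lemma dotvBl k (u v w : 'cV[R]_k) : dotv (u - v) w = dotv u w - dotv v w.
Proof. by rewrite dotvDl dotvNl. Qed.

Lemma dotvDr k (u v w : 'cV[R]_k) : dotv w (u + v) = dotv w u + dotv w v.
Proof. by rewrite dotvC dotvDl !(dotvC w). Qed.
Lemma dotvZr k a (u w : 'cV[R]_k) : dotv w (a *: u) = a * dotv w u.
Proof. by rewrite dotvC dotvZl dotvC. Qed.
Lemma dotvBr k (u v w : 'cV[R]_k) : dotv w (u - v) = dotv w u - dotv w v.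
Proof. by rewrite dotvC dotvBl !(dotvC w). Qed.
Lemma dotvNr k (u w : 'cV[R]_k) : dotv w (- u) = - dotv w u.
Proof. by rewrite dotvC dotvNl dotvC. Qed.

Lemma dotv_suml k (I : finType) (F : I -> 'cV[R]_k) w :
  dotv (\sum_i F i) w = \sum_i dotv (F i) w.
Proof.
rewrite /dotv exchange_big /=; apply: eq_bigr => j _.
by rewrite summxE mulr_suml.
Qed.

Lemma dotv_ge0 k (u : 'cV[R]_k) : 0 <= dotv u u.
Proof. by apply: sumr_ge0 => i _; rewrite -expr2 sqr_ge0. Qed.

Lemma dotv_eq0 k (u : 'cV[R]_k) : dotv u u = 0 -> u = 0.
Proof.
move=> h; apply/matrixP => i j; rewrite !mxE (ord1 j).
have := psumr_eq0P (fun i _ => sqr_ge0 (u i 0)) _ (i := i).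
rewrite /dotv in h.
have h' : \sum_(i < k) u i 0 ^+ 2 = 0 by rewrite -[RHS]h; apply: eq_bigr => ? _; exact: expr2.
move=> /(_ xpredT h' isT) /eqP; by rewrite sqrf_eq0 => /eqP.
Qed.

Lemma norm2_dot k (u : 'cV[R]_k) : norm2 u = 1 -> dotv u u = 1.
Proof.
move=> h; rewrite -(sqr_sqrtr (dotv_ge0 u)) -/(norm2 u) h; exact: expr1n.
Qed.

Lemma dot_norm2 k (u : 'cV[R]_k) : dotv u u = 1 -> norm2 u = 1.
Proof. by rewrite /norm2 => ->; rewrite sqrtr1. Qed.

Lemma cs_unit k (u v : 'cV[R]_k) : dotv u u = 1 -> dotv v u ^+ 2 <= dotv v v.
Proof.
move=> hu; have := dotv_ge0 (v - dotv v u *: u).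
rewrite !(dotvBl, dotvBr, dotvZl, dotvZr) hu (dotvC u v).
move=> h; nra.
Qed.

Lemma dot_unit_le1 k (u v : 'cV[R]_k) : dotv u u = 1 -> dotv v v = 1 -> dotv u v <= 1.
Proof.
move=> hu hv; have := dotv_ge0 (u - v).
rewrite !(dotvBl, dotvBr) hu hv (dotvC v u); lra.
Qed.

Lemma dot_unit_ge_1 k (u v : 'cV[R]_k) : dotv u u = 1 -> dotv v v = 1 -> -1 <= dotv u v.
Proof.
move=> hu hv; have := dotv_ge0 (u + v).
rewrite !(dotvDl, dotvDr) hu hv (dotvC v u); lra.
Qed.

Lemma dot_unit_eq1 k (u v : 'cV[R]_k) : dotv u u = 1 -> dotv v v = 1 -> dotv u v = 1 -> u = v.
Proof.
move=> hu hv huv; apply/eqP; rewrite -subr_eq0; apply/eqP/dotv_eq0.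
by rewrite !(dotvBl, dotvBr) hu hv (dotvC v u) huv; ring.
Qed.

Lemma dot_unit_eqm1 k (u v : 'cV[R]_k) : dotv u u = 1 -> dotv v v = 1 -> dotv u v = -1 -> u = - v.
Proof.
move=> hu hv huv; apply/eqP; rewrite -subr_eq0 opprK; apply/eqP/dotv_eq0.
by rewrite !(dotvDl, dotvDr) hu hv (dotvC v u) huv; ring.
Qed.

Lemma mulmx_cols m n (A : 'M[R]_(m, n)) (q : 'cV[R]_n) :
  A *m q = \sum_j q j 0 *: col j A.
Proof.
apply/matrixP => i l; rewrite !mxE summxE; apply: eq_bigr => j _.
by rewrite !mxE (ord1 l) mulrC.
Qed.

End Basics.

Section Main.
Variable R : realType.
Variables (n m : nat) (alpha : R) (beta : 'cV[R]_m) (gamma : 'cV[R]_n).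
Hypothesis halpha : 0 < alpha.
Hypothesis hbeta1 : dotv beta beta = 1.

Definition Dv (A : 'M[R]_(m, n)) (q : 'cV[R]_n) :=
  alpha * dotv (A *m q - beta) (A *m q - beta) + dotv (q - gamma) (q - gamma).

Lemma Omega_eq A q : Omega alpha beta gamma A q =
  alpha / 2 + dotv gamma gamma / 2 - Dv A q / 2.
Proof.
rewrite /Omega /Dv !(dotvBl, dotvBr) hbeta1 (dotvC beta) (dotvC gamma q).
by field.
Qed.

Lemma max_Dv A q : is_maximizer alpha beta gamma A q ->
  forall A' q', inAset A' -> nonneg_vec q' -> Dv A q <= Dv A' q'.
Proof.
case=> _ _ h A' q' hA hq; have := h A' q' hA hq; rewrite !Omega_eq; lra.
Qed.

Lemma Dv_ge0 A q : 0 <= Dv A q.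
Proof. by rewrite /Dv; apply: addr_ge0; [apply: mulr_ge0; [exact: ltW|exact: dotv_ge0]|exact: dotv_ge0]. Qed.

Definition Aw (w : 'cV[R]_n) : 'M[R]_(m, n) := \matrix_(k, j) (w j 0 * beta k 0).

Lemma col_Aw (w : 'cV[R]_n) j : col j (Aw w) = w j 0 *: beta.
Proof. by apply/matrixP => k l; rewrite !mxE (ord1 l). Qed.

Lemma Aw_in (w : 'cV[R]_n) : (forall j, w j 0 ^+ 2 = 1) -> inAset (Aw w).
Proof.
move=> hw j; apply: dot_norm2; rewrite col_Aw dotvZl dotvZr hbeta1 mulr1 -expr2; exact: hw.
Qed.

Lemma Aw_mul (w q : 'cV[R]_n) : Aw w *m q = dotv w q *: beta.
Proof.
rewrite mulmx_cols; under eq_bigr do rewrite col_Aw scalerA.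
by rewrite -scaler_suml; congr (_ *: _); apply: eq_bigr => j _; rewrite mulrC.
Qed.

Lemma dotv_w_w (w : 'cV[R]_n) : (forall j, w j 0 ^+ 2 = 1) -> dotv w w = n%:R.
Proof.
move=> hw; rewrite /dotv (eq_bigr (fun _ => 1)); last by move=> j _; rewrite -expr2.
by rewrite sumr_const card_ord.
Qed.

End Main.

Section Core.
Variable R : realType.
Variables (n m : nat) (alpha : R) (beta : 'cV[R]_m) (gamma : 'cV[R]_n).
Hypothesis halpha : 0 < alpha.
Hypothesis hbeta1 : dotv beta beta = 1.
Variable w : 'cV[R]_n.
Hypothesis hw : forall j, w j 0 ^+ 2 = 1.

Definition kap := alpha * (1 - dotv w gamma) / (1 + n%:R * alpha).
Definition qs := gamma + kap *: w.

Lemma den_gt0 : 0 < 1 + n%:R * alpha.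
Proof. by rewrite ltr_wpDr // mulr_ge0 // ?ler0n // ltW. Qed.

Lemma kap_eq : 1 - dotv w qs = kap / alpha.
Proof.
rewrite /qs dotvDr dotvZr (dotv_w_w hw) /kap.
have h1 := den_gt0; have h2 : alpha != 0 by rewrite gt_eqF.
field; by rewrite h2 gt_eqF.
Qed.

Lemma core_Dv A q :
  Dv alpha beta gamma A q = alpha * dotv (A *m q - beta) (A *m q - beta)
     + dotv (q - qs) (q - qs) + 2 * kap * dotv w (q - qs) + n%:R * kap ^+ 2.
Proof.
rewrite /Dv.
have -> : q - gamma = (q - qs) + kap *: w by rewrite /qs; apply/matrixP=> i j; rewrite !mxE; ring.
rewrite !(dotvDl, dotvDr, dotvZl, dotvZr) (dotv_w_w hw) (dotvC q w) (dotvC (- qs) w); ring.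
Qed.

Lemma core_W q : dotv w q = dotv w qs + dotv w (q - qs).
Proof. by rewrite dotvBr; ring. Qed.

Lemma core_star : Dv alpha beta gamma (Aw beta w) qs = kap ^+ 2 / alpha + n%:R * kap ^+ 2.
Proof.
rewrite /Dv Aw_mul.
have -> : dotv w qs *: beta - beta = (dotv w qs - 1) *: beta by rewrite scalerBl scale1r.
have -> : qs - gamma = kap *: w by rewrite /qs addrC addKr.
rewrite !(dotvZl, dotvZr) hbeta1 (dotv_w_w hw).
have := kap_eq; have h2 : alpha != 0 by rewrite gt_eqF.
move=> h; have -> : dotv w qs - 1 = - (kap / alpha) by rewrite -h; ring.
by field.
Qed.

End Core.

Lemma key2 (R : realType) (a e t P : R) : 0 < a -> 0 <= P -> 0 <= e ->
  (0 <= e - t -> a * (e - t) ^+ 2 <= P) -> a * e ^+ 2 <= P + 2 * a * e * t.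
Proof.
move=> ha hP he h; case: (lerP 0 (e - t)) => ht.
  by have := h ht; nra.
have h1 : 0 <= a * e by apply: mulr_ge0 => //; exact: ltW.
have : 0 <= a * e * (t - e) by apply: mulr_ge0 => //; lra.
nra.
Qed.

Lemma key3 (R : realType) (a e t P : R) : 0 < a -> 0 <= P -> e <= 0 ->
  (0 <= t - e -> a * (t - e) ^+ 2 <= P) -> a * e ^+ 2 <= P + 2 * a * e * t.
Proof.
move=> ha hP he h; case: (lerP 0 (t - e)) => ht.
  by have := h ht; nra.
have h1 : 0 <= a * (- e) by apply: mulr_ge0; lra.
have : 0 <= a * (- e) * (e - t) by apply: mulr_ge0 => //; lra.
nra.
Qed.

Lemma dot_Aq (R : realType) m n (A : 'M[R]_(m, n)) q v :
  dotv (A *m q) v = \sum_j q j 0 * dotv (col j A) v.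
Proof. by rewrite mulmx_cols dotv_suml; apply: eq_bigr => j _; rewrite dotvZl. Qed.

Section Core2.
Variable R : realType.
Variables (n m : nat) (alpha : R) (beta : 'cV[R]_m) (gamma : 'cV[R]_n).
Hypothesis halpha : 0 < alpha.
Hypothesis hbeta1 : dotv beta beta = 1.
Variable w : 'cV[R]_n.
Hypothesis hw : forall j, w j 0 ^+ 2 = 1.

Lemma core_conclude A q :
  Dv alpha beta gamma A q <= Dv alpha beta gamma (Aw beta w) (qs alpha gamma w) ->
  kap alpha gamma w ^+ 2 / alpha <= alpha * dotv (A *m q - beta) (A *m q - beta)
     + 2 * kap alpha gamma w * dotv w (q - qs alpha gamma w) ->
  q = qs alpha gamma w /\
  alpha * dotv (A *m q - beta) (A *m q - beta) <= kap alpha gamma w ^+ 2 / alpha.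
Proof.
rewrite (core_Dv alpha beta gamma hw) (core_star gamma halpha hbeta1 hw).
set P := alpha * _; set k := kap _ _ _; set d := q - _ => hle hkey.
have hd0 := dotv_ge0 d.
have hdd : dotv d d = 0 by lra.
have d0 := dotv_eq0 hdd.
split; first by apply/eqP; rewrite -subr_eq0; apply/eqP.
move: hle; rewrite hdd d0 /dotv big1 ?mulr0 ?addr0; last by move=> j _; rewrite mxE mulr0.
lra.
Qed.

End Core2.

Lemma part2 (R : realType) (n m : nat) (alpha : R) (beta : 'cV[R]_m) (gamma : 'cV[R]_n)
  (halpha : 0 < alpha) (hbeta1 : dotv beta beta = 1) (hgamma : forall i, 0 < gamma i 0)
  (A : 'M[R]_(m, n)) (q : 'cV[R]_n)
  (hmax : is_maximizer alpha beta gamma A q) (hR : Rfun gamma <= 1) :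
  (forall i, q i 0 = gamma i 0 + alpha * (1 - Rfun gamma) / (1 + n%:R * alpha)) /\
     A *m q = Rfun q *: beta /\
     A = \matrix_(k < m, j < n) beta k 0.
Proof.
pose w : 'cV[R]_n := const_mx 1.
have hw : forall j, w j 0 ^+ 2 = 1 by move=> j; rewrite mxE expr1n.
have hwv : forall v, dotv w v = \sum_j v j 0.
  by move=> v; apply: eq_bigr => j _; rewrite mxE mul1r.
have hRg : Rfun gamma = dotv w gamma.
  by rewrite /Rfun /norm1 hwv; apply: eq_bigr => j _; rewrite ger0_norm // ltW.
have hkap : kap alpha gamma w = alpha * (1 - Rfun gamma) / (1 + n%:R * alpha) by rewrite /kap hRg.
have hden := den_gt0 n halpha.
have k0 : 0 <= kap alpha gamma w.
  rewrite hkap; apply: divr_ge0; last exact: ltW.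
  by apply: mulr_ge0; [exact: ltW | lra].
have qpos : forall j, 0 < qs alpha gamma w j 0.
  by move=> j; rewrite !mxE mulr1; apply: ltr_wpDr => //.
case: (hmax) => hA hq _.
have hqs : nonneg_vec (qs alpha gamma w) by move=> j; exact: ltW.
have hle := max_Dv hbeta1 hmax (Aw_in hbeta1 hw) hqs.
have hcol : forall j, dotv (col j A) (col j A) = 1 by move=> j; exact: norm2_dot.
set x := A *m q.
set y := dotv x beta.
have hyle : forall q', nonneg_vec q' -> dotv (A *m q') beta <= dotv w q'.
  move=> q' hq'; rewrite dot_Aq hwv; apply: ler_sum => j _.
  by have := hq' j; have := dot_unit_le1 (hcol j) hbeta1; nra.
have hy : y <= dotv w q := hyle q hq.
have hP : alpha * (1 - y) ^+ 2 <= alpha * dotv (x - beta) (x - beta).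
  rewrite !(dotvBl, dotvBr) hbeta1 (dotvC beta x) -/y.
  have := cs_unit x hbeta1; rewrite -/y => h; nra.
have hke := kap_eq gamma halpha hw.
have hW := core_W alpha gamma w q.
have [hqq hPle] : q = qs alpha gamma w /\
    alpha * dotv (x - beta) (x - beta) <= kap alpha gamma w ^+ 2 / alpha.
  apply: (core_conclude halpha hbeta1 hw hle).
  set k := kap _ _ _; set t := dotv w _.
  have -> : k ^+ 2 / alpha = alpha * (k / alpha) ^+ 2 by field; rewrite gt_eqF.
  have -> : 2 * k * t = 2 * alpha * (k / alpha) * t by field; rewrite gt_eqF.
  apply: key2 => //.
  - by apply: mulr_ge0; [exact: ltW | exact: dotv_ge0].
  - by apply: divr_ge0 => //; exact: ltW.
  move=> h; rewrite -hke in h *.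
  have e1 : 1 - dotv w (qs alpha gamma w) - t = 1 - dotv w q by rewrite /t hW; ring.
  rewrite e1 in h *; apply: le_trans hP.
  apply: ler_wpM2l; first exact: ltW.
  have h3 : 0 <= (dotv w q - y) * ((1 - y) + (1 - dotv w q)) by apply: mulr_ge0; lra.
  nra.
have hyeq : y = dotv w q.
  have : alpha * (1 - y) ^+ 2 <= alpha * (kap alpha gamma w / alpha) ^+ 2.
    by apply: (le_trans hP); apply: (le_trans hPle); rewrite le_eqVlt; apply/orP; left; apply/eqP; field; rewrite gt_eqF.
  rewrite -hke -hqq => h.
  have h2 : (1 - y) ^+ 2 <= (1 - dotv w q) ^+ 2.
    by rewrite -(ler_pM2l halpha).
  have : 0 <= 1 - dotv w q by rewrite hqq hke; apply: divr_ge0 => //; exact: ltW.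
  nra.
have hcolb : forall j, col j A = beta.
  move=> j; apply (dot_unit_eq1 (hcol j) hbeta1).
  have hsum : \sum_j q j 0 * (1 - dotv (col j A) beta) = dotv w q - y.
    rewrite /y /x dot_Aq hwv -sumrB; apply: eq_bigr => i _; ring.
  rewrite hyeq subrr in hsum.
  have hge : forall i, true -> 0 <= q i 0 * (1 - dotv (col i A) beta).
    by move=> i _; apply: mulr_ge0; [exact: hq | rewrite subr_ge0; exact: dot_unit_le1 (hcol i) hbeta1].
  have := psumr_eq0P hge hsum (i := j) isT.
  move/eqP; rewrite mulf_eq0 => /orP [/eqP h|]; last by rewrite subr_eq0 => /eqP <-.
  by have := qpos j; rewrite -hqq h ltxx.
have hAeq : A = \matrix_(k < m, j < n) beta k 0.
  apply/matrixP => k j; rewrite mxE.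
  by have := congr1 (fun M : 'cV[R]_m => M k 0) (hcolb j); rewrite /= mxE.
split; first by move=> i; rewrite hqq /qs !mxE mulr1 hkap.
split=> //.
have -> : x = Aw beta w *m q.
  by rewrite /x hAeq; congr (_ *m _); apply/matrixP => k j; rewrite !mxE mul1r.
rewrite Aw_mul; congr (_ *: _).
by rewrite /Rfun /norm1 hwv; apply: eq_bigr => j _; rewrite ger0_norm // hq.
Qed.

Lemma sq_eq (R : realType) (u e : R) : 0 <= e -> e <= u -> u ^+ 2 <= e ^+ 2 -> u = e.
Proof. move=> h1 h2 h3. nra. Qed.

Lemma norminf_eq (R : realType) n (v : 'cV[R]_n) i :
  0 <= v i 0 -> (forall j, `|v j 0| <= v i 0) -> norminf v = v i 0.
Proof.
move=> h0 h; apply/le_anti/andP; split.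
  by apply: bigmax_le.
by have := le_bigmax 0 (fun j => `|v j 0|) i; rewrite ger0_norm.
Qed.

Lemma part3 (R : realType) (n m : nat) (hn : (2 <= n)%N) (alpha : R) (beta : 'cV[R]_m) (gamma : 'cV[R]_n)
  (halpha : 0 < alpha) (hbeta1 : dotv beta beta = 1) (hgamma : forall i, 0 < gamma i 0)
  (A : 'M[R]_(m, n)) (q : 'cV[R]_n)
  (hmax : is_maximizer alpha beta gamma A q) (hr : 1 <= rfun gamma) (i : 'I_n)
  (hi : gamma i 0 = norminf gamma) :
     q i 0 = gamma i 0 - alpha * (rfun gamma - 1) / (1 + n%:R * alpha) /\
     (forall j, j != i -> q j 0 = gamma j 0 + alpha * (rfun gamma - 1) / (1 + n%:R * alpha)) /\
     A *m q = rfun q *: beta /\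
     A = \matrix_(k < m, j < n) (if j == i then beta k 0 else - beta k 0).
Proof.
pose w : 'cV[R]_n := \col_j (if j == i then 1 else -1).
have hw : forall j, w j 0 ^+ 2 = 1 by move=> j; rewrite mxE; case: ifP => _; rewrite ?sqrrN expr1n.
have hwv : forall v : 'cV[R]_n, dotv w v = 2 * v i 0 - \sum_j v j 0.
  move=> v; rewrite /dotv (bigD1 i) //= (bigD1 i (P := xpredT)) //= mxE eqxx mul1r.
  rewrite (eq_bigr (fun j => - v j 0)); last by move=> j /negbTE hj; rewrite mxE hj mulN1r.
  by rewrite sumrN; ring.
have hn2 : 2 <= n%:R :> R by rewrite ler_nat.
have hrg : rfun gamma = dotv w gamma.
  rewrite /rfun -hi hwv /norm1; congr (_ - _); apply: eq_bigr => j _; by rewrite ger0_norm // ltW.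
have hden := den_gt0 n halpha.
have hkap : kap alpha gamma w = - (alpha * (rfun gamma - 1) / (1 + n%:R * alpha)).
  by rewrite /kap -hrg; field; rewrite gt_eqF.
set c := alpha * (rfun gamma - 1) / (1 + n%:R * alpha) in hkap *.
have hc0 : 0 <= c by apply: divr_ge0; [apply: mulr_ge0; lra | lra].
have hcd : c * (1 + n%:R * alpha) = alpha * (rfun gamma - 1) by rewrite /c; field; rewrite gt_eqF.
have hothers : forall j, j != i -> gamma j 0 <= \sum_(l | l != i) gamma l 0.
  move=> j hj; rewrite (bigD1 j) //=; rewrite ler_wpDr //.
  by apply: sumr_ge0 => l _; exact: ltW.
have hrg2 : rfun gamma = gamma i 0 - \sum_(l | l != i) gamma l 0.
  by rewrite hrg hwv (bigD1 i) //=; ring.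
have hsum0 : 0 <= \sum_(l | l != i) gamma l 0 by apply: sumr_ge0 => l _; exact: ltW.
have hqs : forall j, qs alpha gamma w j 0 = if j == i then gamma i 0 - c else gamma j 0 + c.
  by move=> j; rewrite !mxE hkap; case: ifP => [/eqP ->|_]; ring.
have qpos : forall j, 0 < qs alpha gamma w j 0.
  move=> j; rewrite hqs; case: ifP => _; last by have := hgamma j; lra.
  have hgi := hgamma i.
  have : c * (1 + n%:R * alpha) < gamma i 0 * (1 + n%:R * alpha).
    rewrite hcd.
    have h1 : alpha * rfun gamma <= alpha * gamma i 0 by apply: ler_wpM2l; [exact: ltW | lra].
    have h2 : 0 <= n%:R * alpha * gamma i 0 by apply: mulr_ge0; [apply: mulr_ge0; lra | lra].
    nra.
  by rewrite ltr_pM2r // subr_gt0.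
case: (hmax) => hA hq _.
have hqsn : nonneg_vec (qs alpha gamma w) by move=> j; exact: ltW.
have hle := max_Dv hbeta1 hmax (Aw_in hbeta1 hw) hqsn.
have hcol : forall j, dotv (col j A) (col j A) = 1 by move=> j; exact: norm2_dot.
set ai := col i A.
set x := A *m q.
set z := dotv x ai.
set b := dotv beta ai.
have hb : b <= 1 by exact: dot_unit_le1 hbeta1 (hcol i).
have hzge : forall q', nonneg_vec q' -> dotv w q' <= dotv (A *m q') ai.
  move=> q' hq'; rewrite dot_Aq [dotv w q']/dotv; apply: ler_sum => j _.
  rewrite mxE; case: (eqVneq j i) => [->|hj].
    by rewrite (hcol i) mulr1 mul1r.
  have := dot_unit_ge_1 (hcol j) (hcol i); have := hq' j; nra.
have hz : dotv w q <= z := hzge q hq.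
have hP : alpha * (z - b) ^+ 2 <= alpha * dotv (x - beta) (x - beta).
  apply: ler_wpM2l; first exact: ltW.
  have := cs_unit (x - beta) (hcol i); rewrite dotvBl.
  by rewrite -/ai -/z; apply.
have hke := kap_eq gamma halpha hw.
have hW := core_W alpha gamma w q.
have hb' : -1 <= b by exact: dot_unit_ge_1 hbeta1 (hcol i).
have [hqq hPle] : q = qs alpha gamma w /\
    alpha * dotv (x - beta) (x - beta) <= kap alpha gamma w ^+ 2 / alpha.
  apply: (core_conclude halpha hbeta1 hw hle).
  set k := kap _ _ _; set t := dotv w _.
  have -> : k ^+ 2 / alpha = alpha * (k / alpha) ^+ 2 by field; rewrite gt_eqF.
  have -> : 2 * k * t = 2 * alpha * (k / alpha) * t by field; rewrite gt_eqF.
  apply: key3 => //.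
  - by apply: mulr_ge0; [exact: ltW | exact: dotv_ge0].
  - rewrite /k hkap mulNr oppr_le0; apply: divr_ge0 => //; exact: ltW.
  move=> h; rewrite -hke in h *.
  have e1 : t - (1 - dotv w (qs alpha gamma w)) = dotv w q - 1 by rewrite /t hW; ring.
  rewrite e1 in h *; apply: le_trans hP.
  apply: ler_wpM2l; first exact: ltW.
  have h3 : 0 <= (z - b - (dotv w q - 1)) * ((z - b) + (dotv w q - 1)) by apply: mulr_ge0; lra.
  nra.
rewrite hqq in hz.
set Ws := dotv w (qs alpha gamma w) in hke hz.
have hWc : Ws - 1 = c / alpha by rewrite -opprB hke hkap mulNr opprK.
have hca : 0 <= c / alpha by apply: divr_ge0 => //; exact: ltW.
have hsq : (z - b) ^+ 2 <= (c / alpha) ^+ 2.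
  rewrite -(ler_pM2l halpha); apply: (le_trans hP); apply: (le_trans hPle).
  rewrite hkap sqrrN le_eqVlt; apply/orP; left; apply/eqP; by field; rewrite gt_eqF.
have hzb : z - b = c / alpha.
  have h1 : c / alpha <= z - b by lra.
  exact (sq_eq hca h1 hsq).
have hb1 : b = 1 by lra.
have hzW : z = Ws by lra.
have hai : ai = beta.
  by apply (dot_unit_eq1 (hcol i) hbeta1); rewrite dotvC.
have hcolw : forall j, col j A = w j 0 *: beta.
  move=> j; case: (eqVneq j i) => [->|hj]; first by rewrite mxE eqxx scale1r.
  rewrite mxE (negbTE hj) scaleN1r; apply (dot_unit_eqm1 (hcol j) hbeta1).
  have hsum : \sum_l q l 0 * (dotv (col l A) ai - w l 0) = z - dotv w q.
    rewrite /z /x dot_Aq [dotv w q]/dotv -sumrB; apply: eq_bigr => l _; ring.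
  have hWq : Ws = dotv w q by rewrite /Ws -hqq.
  rewrite hzW hWq subrr in hsum.
  have hge : forall l, true -> 0 <= q l 0 * (dotv (col l A) ai - w l 0).
    move=> l _; apply: mulr_ge0; first exact: hq.
    rewrite mxE; case: (eqVneq l i) => [->|hl]; first by rewrite (hcol i) subrr.
    by have := dot_unit_ge_1 (hcol l) (hcol i); rewrite -/ai; lra.
  have := psumr_eq0P hge hsum (i := j) isT.
  move/eqP; rewrite mulf_eq0 => /orP [/eqP h|].
    by have := qpos j; rewrite -hqq h ltxx.
  rewrite mxE (negbTE hj) subr_eq0 => /eqP h; rewrite -hai; lra.
have hAw : A = Aw beta w.
  apply/matrixP => k j; rewrite [RHS]mxE.
  by have := congr1 (fun M : 'cV[R]_m => M k 0) (hcolw j); rewrite !mxE /=.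
have hqj : forall j, j != i -> q j 0 = gamma j 0 + c.
  by move=> j hj; rewrite hqq hqs (negbTE hj).
have hqi : q i 0 = gamma i 0 - c by rewrite hqq hqs eqxx.
split=> //; split=> //; split.
  rewrite /x hAw Aw_mul; congr (_ *: _).
  rewrite /rfun /norm1 (@norminf_eq _ _ q i) ?hq //.
    rewrite hwv; congr (_ - _); apply: eq_bigr => j _; by rewrite ger0_norm // hq.
  move=> j; rewrite ger0_norm ?hq //; case: (eqVneq j i) => [->|hj]; first by [].
  rewrite hqj // hqi.
  have hgj := hothers j hj.
  have h3 : 0 <= (n%:R - 2) * alpha * rfun gamma by apply: mulr_ge0; [apply: mulr_ge0; lra | lra].
  nra.
rewrite hAw; apply/matrixP => k j; rewrite !mxE.
by case: (j == i); rewrite ?mul1r ?mulN1r.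
Qed.

Lemma tri (R : realType) (a b X Y : R) : 0 <= a -> 0 <= b ->
  (a - b) ^+ 2 <= X ^+ 2 + Y ^+ 2 -> X ^+ 2 + Y ^+ 2 <= (a + b) ^+ 2 ->
  exists c1 s1 c2 s2 : R, [/\ c1 ^+ 2 + s1 ^+ 2 = 1, c2 ^+ 2 + s2 ^+ 2 = 1,
     a * c1 + b * c2 = X & a * s1 + b * s2 = Y].
Proof.
move=> ha hb h1 h2.
set d2 := X ^+ 2 + Y ^+ 2 in h1 h2.
have hd0 : 0 <= d2 by rewrite /d2; apply: addr_ge0; exact: sqr_ge0.
case: (eqVneq d2 0) => hd.
  have hX : X = 0 by have := sqr_ge0 X; have := sqr_ge0 Y; move/eqP: hd; rewrite /d2 => /eqP hd u v; apply/eqP; rewrite -sqrf_eq0; apply/eqP; lra.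
  have hY : Y = 0 by have := sqr_ge0 X; have := sqr_ge0 Y; move/eqP: hd; rewrite /d2 => /eqP hd u v; apply/eqP; rewrite -sqrf_eq0; apply/eqP; lra.
  have hab : a = b by rewrite hd in h1; have := sqr_ge0 (a - b) => h; apply/eqP; rewrite -subr_eq0 -sqrf_eq0; apply/eqP; lra.
  by exists 1, 0, (-1), 0; split; rewrite ?hX ?hY ?hab; ring.
have hdp : 0 < d2 by rewrite lt_def hd hd0.
case: (eqVneq a 0) => ha0.
  have hbb : b ^+ 2 = d2 by rewrite ha0 in h1 h2; rewrite sub0r sqrrN in h1; rewrite add0r in h2; lra.
  have hb0 : b != 0 by apply/eqP => e; rewrite e in hbb; lra.
  exists 1, 0, (X / b), (Y / b); split.
  - by ring.
  - by rewrite !expr_div_n -mulrDl -/d2 -hbb divff // expf_neq0.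
  - by rewrite ha0; field.
  - by rewrite ha0; field.
case: (eqVneq b 0) => hb0.
  have haa : a ^+ 2 = d2 by rewrite hb0 in h1 h2; rewrite subr0 in h1; rewrite addr0 in h2; lra.
  exists (X / a), (Y / a), 1, 0; split.
  - by rewrite !expr_div_n -mulrDl -/d2 -haa divff // expf_neq0.
  - by ring.
  - by rewrite hb0; field.
  - by rewrite hb0; field.
set p := (d2 + a ^+ 2 - b ^+ 2) / (2 * a).
have hp : p ^+ 2 <= d2.
  have ha2 : 0 < 4 * a ^+ 2 by rewrite mulr_gt0 // exprn_gt0 // lt_def ha0 ha.
  rewrite -(ler_pM2l ha2).
  have -> : 4 * a ^+ 2 * p ^+ 2 = (d2 + a ^+ 2 - b ^+ 2) ^+ 2 by rewrite /p; field.
  have : 0 <= ((a + b) ^+ 2 - d2) * (d2 - (a - b) ^+ 2) by apply: mulr_ge0; lra.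
  nra.
set h := Num.sqrt (d2 - p ^+ 2).
have hh : h ^+ 2 = d2 - p ^+ 2 by rewrite sqr_sqrtr // subr_ge0.
set u1 := (p * X - h * Y) / d2.
set u2 := (p * Y + h * X) / d2.
have hu : u1 ^+ 2 + u2 ^+ 2 = 1.
  rewrite /u1 /u2 !expr_div_n -mulrDl.
  have -> : (p * X - h * Y) ^+ 2 + (p * Y + h * X) ^+ 2 = (p ^+ 2 + h ^+ 2) * d2 by rewrite /d2; ring.
  by rewrite hh subrKC -expr2 divff // expf_neq0.
have hut : X * u1 + Y * u2 = p.
  rewrite /u1 /u2.
  have -> : X * ((p * X - h * Y) / d2) + Y * ((p * Y + h * X) / d2) = p * ((X ^+ 2 + Y ^+ 2) / d2) by field.
  by rewrite -/d2 divff // mulr1.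
exists u1, u2, ((X - a * u1) / b), ((Y - a * u2) / b); split => //.
- rewrite !expr_div_n -mulrDl.
  have -> : (X - a * u1) ^+ 2 + (Y - a * u2) ^+ 2 = d2 - 2 * a * (X * u1 + Y * u2) + a ^+ 2 * (u1 ^+ 2 + u2 ^+ 2) by rewrite /d2; ring.
  rewrite hut hu /p.
  have -> : d2 - 2 * a * ((d2 + a ^+ 2 - b ^+ 2) / (2 * a)) + a ^+ 2 * 1 = b ^+ 2 by field.
  by rewrite divff // expf_neq0.
- by field.
- by field.
Qed.

Lemma tri3 (R : realType) (P Q Rr : R) : 0 <= P -> 0 <= Q -> 0 <= Rr ->
  1 <= P + Q + Rr -> 2 * P <= P + Q + Rr + 1 -> 2 * Q <= P + Q + Rr + 1 ->
  2 * Rr <= P + Q + Rr + 1 ->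
  exists U1 U2 V1 V2 W1 W2 : R, [/\ U1 ^+ 2 + U2 ^+ 2 = 1, V1 ^+ 2 + V2 ^+ 2 = 1,
     W1 ^+ 2 + W2 ^+ 2 = 1, P * U1 + Q * V1 + Rr * W1 = 1 &
     P * U2 + Q * V2 + Rr * W2 = 0].
Proof.
move=> hP hQ hR hS h1 h2 h3.
set l := Num.max (Num.max (P - 1) (1 - P)) (Num.max (Q - Rr) (Rr - Q)).
have hl1 : P - 1 <= l /\ 1 - P <= l /\ Q - Rr <= l /\ Rr - Q <= l.
  by rewrite /l !le_max !lexx /= !orbT.
have hl2 : l <= Q + Rr /\ l <= P + 1.
  by rewrite /l !ge_max; split; apply/andP; split; apply/andP; split; lra.
case: hl1 => [a1 [a2 [a3 a4]]]; case: hl2 => [b1 b2].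
have hl0 : 0 <= l by lra.
have [c1 [s1 [c2 [s2 [u1 u2 e1 e2]]]]] : exists c1 s1 c2 s2 : R, [/\ c1 ^+ 2 + s1 ^+ 2 = 1, c2 ^+ 2 + s2 ^+ 2 = 1,
     P * c1 + l * c2 = 1 & P * s1 + l * s2 = 0].
  apply: tri => //.
  - have : 0 <= (1 - (P - l)) * (1 + (P - l)) by apply: mulr_ge0; lra.
    nra.
  - have : 0 <= (P + l - 1) * (P + l + 1) by apply: mulr_ge0; lra.
    nra.
have [v1 [v2 [w1 [w2 [u3 u4 e3 e4]]]]] : exists y1 y2 z1 z2 : R, [/\ y1 ^+ 2 + y2 ^+ 2 = 1, z1 ^+ 2 + z2 ^+ 2 = 1,
     Q * y1 + Rr * z1 = l * c2 & Q * y2 + Rr * z2 = l * s2].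
  apply: tri => //.
  - have -> : (l * c2) ^+ 2 + (l * s2) ^+ 2 = l ^+ 2 by rewrite !exprMn -mulrDr u2 mulr1.
    have : 0 <= (l - (Q - Rr)) * (l + (Q - Rr)) by apply: mulr_ge0; lra.
    nra.
  - have -> : (l * c2) ^+ 2 + (l * s2) ^+ 2 = l ^+ 2 by rewrite !exprMn -mulrDr u2 mulr1.
    have : 0 <= (Q + Rr - l) * (Q + Rr + l) by apply: mulr_ge0; lra.
    nra.
exists c1, s1, v1, v2, w1, w2; split => //.
- by rewrite -addrA e3.
- by rewrite -addrA e4.
Qed.

Lemma split3 (R : realType) n (g : 'I_n -> R) (k : 'I_n) (u v w : R) :
  \sum_j g j * (if (val j < val k)%N then u else if j == k then v else w) =
  (\sum_(j | (val j < val k)%N) g j) * u + g k * v + (\sum_(j | (val k < val j)%N) g j) * w.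
Proof.
rewrite -(big_pred1_eq +%R k g) !mulr_suml [X in X + _ + _]big_mkcond [X in _ + X]big_mkcond [X in _ + X + _]big_mkcond /= -!big_split /=.
apply: eq_bigr => j _.
have hjk : (j == k) = (val j == val k) by [].
rewrite hjk; case: ltngtP => h; ring.
Qed.

Lemma split_exists (R : realType) n (g : 'I_n -> R) (hpos : forall j, 0 <= g j)
  (hS : 0 < \sum_j g j) :
  exists k : 'I_n,
    [/\ 2 * (\sum_(j | (val j < val k)%N) g j) <= \sum_j g j,
        2 * (\sum_(j | (val k < val j)%N) g j) <= \sum_j g j &
        (\sum_(j | (val j < val k)%N) g j) + g k + (\sum_(j | (val k < val j)%N) g j) = \sum_j g j].
Proof.
set S := \sum_j g j in hS *.
pose f (t : nat) := \sum_(j | (val j < t)%N) g j.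
have hfn : f n = S by apply: eq_bigl => j; rewrite ltn_ord.
have hex : exists t, S < 2 * f t by exists n; rewrite hfn; lra.
case: (ex_minnP hex) => k0 hk0 hmin.
case: k0 hk0 hmin => [|k] hk0 hmin.
  by move: hk0; rewrite /f big_pred0 // mulr0; lra.
have hkn : (k < n)%N.
  rewrite ltnNge; apply/negP => hnk.
  have : S < 2 * f k.
    have -> : f k = S by rewrite -hfn; apply: eq_bigl => j; rewrite (leq_trans (ltn_ord j) hnk); rewrite ltn_ord.
    lra.
  by move/hmin; rewrite ltnn.
exists (Ordinal hkn) => /=.
have htot : \sum_(j | (val j < k)%N) g j + g (Ordinal hkn) + \sum_(j | (k < val j)%N) g j = S.
  have := split3 g (Ordinal hkn) 1 1 1; rewrite !mulr1 => <-.
  by rewrite /S; apply: eq_bigr => j _; rewrite !if_same mulr1.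
have hfk1 : f k.+1 = \sum_(j | (val j < k)%N) g j + g (Ordinal hkn).
  have := split3 g (Ordinal hkn) 1 1 0.
  rewrite !mulr1 mulr0 addr0 => <-.
  rewrite /f big_mkcond /=; apply: eq_bigr => j _.
  have hjk : (j == Ordinal hkn) = (val j == k) by [].
  rewrite hjk ltnS; case: ltngtP => h; rewrite ?mulr1 ?mulr0 //.
have hnot : ~~ (S < 2 * f k).
  by apply/negP => /hmin; rewrite ltnn.
rewrite -leNgt in hnot.
split => //.
rewrite -/S in htot hk0 *; rewrite hfk1 in hk0; rewrite /f in hnot; lra.
Qed.

Lemma sum2 (R : realType) m (p l : 'I_m) (F : 'I_m -> R) : l != p ->
  (forall k, k != p -> k != l -> F k = 0) -> \sum_k F k = F p + F l.
Proof.
move=> hlp h; rewrite (bigD1 p) //= (bigD1 l) /=; last by rewrite hlp.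
rewrite big1 ?addr0 // => k /andP [hkp hkl]; exact: h.
Qed.

Lemma orth_exists (R : realType) m (hm : (2 <= m)%N) (beta : 'cV[R]_m) :
  dotv beta beta = 1 -> exists e : 'cV[R]_m, dotv e e = 1 /\ dotv e beta = 0.
Proof.
move=> hb.
have [p hp] : exists p, beta p 0 != 0.
  case: (pickP (fun p => beta p 0 != 0)) => [p hp|h]; first by exists p.
  move: hb; rewrite /dotv big1 => [|k _]; first by move/eqP; rewrite eq_sym oner_eq0.
  by have := h k; move/negbFE/eqP => ->; rewrite mulr0.
have h0 : (0 < m)%N by apply: leq_trans hm.
have h1 : (1 < m)%N by [].
pose l : 'I_m := if val p == 0%N then Ordinal h1 else Ordinal h0.
have hlp : l != p.
  rewrite /l; case: (eqVneq (val p) 0%N) => hp0.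
    by apply/eqP => e; move: hp0; rewrite -e.
  by apply/eqP => e; move: hp0; rewrite -e.
pose e' : 'cV[R]_m := \col_k (if k == p then beta l 0 else if k == l then - beta p 0 else 0).
have e'p : e' p 0 = beta l 0 by rewrite mxE eqxx.
have e'l : e' l 0 = - beta p 0 by rewrite mxE (negbTE hlp) eqxx.
have e'k : forall k, k != p -> k != l -> e' k 0 = 0.
  by move=> k hkp hkl; rewrite mxE (negbTE hkp) (negbTE hkl).
have d1 : dotv e' beta = 0.
  rewrite /dotv (sum2 hlp) ?e'p ?e'l; first ring.
  by move=> k hkp hkl; rewrite e'k ?mul0r.
set N2 := beta l 0 ^+ 2 + beta p 0 ^+ 2.
have d2 : dotv e' e' = N2.
  rewrite /dotv (sum2 hlp) ?e'p ?e'l; first by rewrite /N2; ring.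
  by move=> k hkp hkl; rewrite e'k ?mul0r.
have hN : 0 < N2.
  rewrite /N2; apply: ltr_wpDl; first exact: sqr_ge0.
  by rewrite lt_def sqr_ge0 andbT sqrf_eq0 hp.
exists ((Num.sqrt N2)^-1 *: e'); split.
  rewrite dotvZl dotvZr d2 mulrA -expr2 exprVn sqr_sqrtr ?mulVf //.
    by rewrite gt_eqF.
  exact: ltW.
by rewrite dotvZl d1 mulr0.
Qed.

Lemma construct (R : realType) n m (hm : (2 <= m)%N) (beta : 'cV[R]_m) (gamma : 'cV[R]_n)
  (hb : dotv beta beta = 1) (hg : forall j, 0 < gamma j 0)
  (hr : rfun gamma <= 1) (hR : 1 <= Rfun gamma) :
  exists A0 : 'M[R]_(m, n), inAset A0 /\ A0 *m gamma = beta.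
Proof.
have hS : Rfun gamma = \sum_j gamma j 0.
  by rewrite /Rfun /norm1; apply: eq_bigr => j _; rewrite ger0_norm // ltW.
have hmax : forall j, 2 * gamma j 0 - \sum_j gamma j 0 <= 1.
  move=> j; apply: le_trans hr; rewrite /rfun -/(Rfun gamma) hS lerD2r ler_pM2l //.
  by have := le_bigmax 0 (fun j => `|gamma j 0|) j; rewrite ger0_norm // ltW.
have hpos : forall j, 0 <= gamma j 0 by move=> j; exact: ltW.
have [k [hP hRr htot]] := @split_exists R n (fun j => gamma j 0) hpos ltac:(rewrite -hS; lra).
set P := \sum_(j | _) _ in hP htot.
set Rr := \sum_(j | _) _ in hRr htot.
have P0 : 0 <= P by apply: sumr_ge0.
have R0 : 0 <= Rr by apply: sumr_ge0.
have [U1 [U2 [V1 [V2 [W1 [W2 [hU hV hW e1 e2]]]]]]] := tri3 P0 (hpos k) R0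
  ltac:(rewrite htot -hS; lra) ltac:(rewrite htot; lra)
  ltac:(rewrite htot; have := hmax k; lra) ltac:(rewrite htot; lra).
have [e [he1 heb]] := orth_exists hm hb.
pose sel (a b c : R) (j : 'I_n) := if (val j < val k)%N then a else if j == k then b else c.
pose A0 : 'M[R]_(m, n) := \matrix_(p, j) (sel U1 V1 W1 j * beta p 0 + sel U2 V2 W2 j * e p 0).
have hcol : forall j, col j A0 = sel U1 V1 W1 j *: beta + sel U2 V2 W2 j *: e.
  by move=> j; apply/matrixP => p l; rewrite !mxE (ord1 l).
exists A0; split.
  move=> j; apply: dot_norm2; rewrite hcol !(dotvDl, dotvDr, dotvZl, dotvZr) hb he1 heb (dotvC beta e) heb.
  rewrite /sel; case: ifP => _; last case: ifP => _; lra.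
rewrite mulmx_cols.
under eq_bigr do rewrite hcol scalerDr !scalerA.
rewrite big_split /= -!scaler_suml.
have -> : \sum_i gamma i 0 * sel U1 V1 W1 i = 1 by rewrite split3.
have -> : \sum_i gamma i 0 * sel U2 V2 W2 i = 0 by rewrite split3.
by rewrite scale1r scale0r addr0.
Qed.

Lemma ord2_cases (a : 'I_2) : a = ord0 \/ a = lift ord0 ord0.
Proof. by case: a => [[|[|//]]] ha; [left|right]; apply: val_inj. Qed.

Lemma rank2 (R : realType) m n (A : 'M[R]_(m, n))
  (hcol : forall j, dotv (col j A) (col j A) = 1) (j0 j : 'I_n) :
  dotv (col j0 A) (col j A) ^+ 2 != 1 -> (2 <= \rank A)%N.
Proof.
move=> hc.
set c := dotv (col j0 A) (col j A) in hc.
pose g (l : 'I_2) : 'I_n := if val l == 0%N then j0 else j.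
pose B := colsub g A.
have hB : (\rank B <= \rank A)%N.
  have -> : B = A *m colsub g 1%:M by rewrite mulmx_colsub mulmx1.
  exact: mxrankM_maxl.
pose G := B^T *m B.
have hG : (\rank G <= \rank B)%N by exact: mxrankM_maxr.
have Gab : forall a b, G a b = dotv (col (g a) A) (col (g b) A).
  by move=> a b; rewrite !mxE; apply: eq_bigr => p _; rewrite !mxE.
have hc1 : 1 - c ^+ 2 != 0 by rewrite subr_eq0 eq_sym.
pose H : 'M[R]_2 := (1 - c ^+ 2)^-1 *: \matrix_(a, b) (if a == b then 1 else - c).
have hGH : G *m H = 1%:M.
  apply/matrixP => a b; rewrite !mxE !big_ord_recl big_ord0 addr0 !Gab /H !mxE.
  have g0 : g ord0 = j0 by [].
  have g1 : g (lift ord0 ord0) = j by [].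
  have hc' : dotv (col j A) (col j0 A) = c by rewrite dotvC.
  case: (ord2_cases a) => ->; case: (ord2_cases b) => ->;
    rewrite ?g0 ?g1 ?hcol ?hc' -/c /=.
  all: try (by field).
have hGu : G \in unitmx by case: (mulmx1_unit hGH).
have := mxrank_unit hGu.
move=> h; rewrite h in hG.
exact: leq_trans hG hB.
Qed.

Lemma dotv0l (R : realType) k (v : 'cV[R]_k) : dotv 0 v = 0.
Proof. by rewrite /dotv big1 // => i _; rewrite mxE mul0r. Qed.

Lemma part1 (R : realType) (n m : nat) (hn : (2 <= n)%N) (hm : (2 <= m)%N)
  (alpha : R) (beta : 'cV[R]_m) (gamma : 'cV[R]_n)
  (halpha : 0 < alpha) (hbeta1 : dotv beta beta = 1) (hgamma : forall i, 0 < gamma i 0)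
  (A : 'M[R]_(m, n)) (q : 'cV[R]_n)
  (hmax : is_maximizer alpha beta gamma A q) :
  rfun gamma <= 1 <= Rfun gamma ->
     q = gamma /\ A *m q = beta /\
     (~ (exists sigma : 'I_n -> R,
           (forall i, sigma i = 1 \/ sigma i = -1) /\
           \sum_(i < n) sigma i * gamma i 0 = 1) ->
        (2 <= \rank A)%N).
Proof.
move=> /andP [hr hR].
have [A0 [hA0 hA0g]] := construct hm hbeta1 hgamma hr hR.
have hgn : nonneg_vec gamma by move=> j; exact: ltW.
have hle := max_Dv hbeta1 hmax hA0 hgn.
have hD0 : Dv alpha beta gamma A0 gamma = 0.
  by rewrite /Dv hA0g !subrr !dotv0l mulr0 addr0.
rewrite hD0 /Dv in hle.
have h1 := dotv_ge0 (A *m q - beta).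
have h2 := dotv_ge0 (q - gamma).
have h3 : 0 <= alpha * dotv (A *m q - beta) (A *m q - beta) by apply: mulr_ge0 => //; exact: ltW.
have hq : q = gamma.
  apply/eqP; rewrite -subr_eq0; apply/eqP; apply: dotv_eq0; lra.
have hx : A *m q = beta.
  apply/eqP; rewrite -subr_eq0; apply/eqP; apply: dotv_eq0.
  have h4 : alpha * dotv (A *m q - beta) (A *m q - beta) = 0 by lra.
  by move/eqP: h4; rewrite mulf_eq0 gt_eqF //= => /eqP.
split => //; split => // hnot.
case: (hmax) => hA _ _.
have hcol : forall j, dotv (col j A) (col j A) = 1 by move=> j; exact: norm2_dot.
have hn0 : (0 < n)%N by apply: leq_trans hn.
pose j0 : 'I_n := Ordinal hn0.
case: (boolP [forall j, dotv (col j0 A) (col j A) ^+ 2 == 1]) => hall; last first.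
  move: hall; rewrite negb_forall => /existsP [j hj].
  exact: rank2 hcol j0 j hj.
exfalso; apply: hnot.
pose sg j := dotv (col j0 A) (col j A).
have hsg : forall j, sg j ^+ 2 = 1 by move=> j; apply/eqP; exact: (forallP hall j).
have hcj : forall j, col j A = sg j *: col j0 A.
  move=> j; apply/eqP; rewrite -subr_eq0; apply/eqP; apply: dotv_eq0.
  rewrite !(dotvBl, dotvBr, dotvZl, dotvZr) !hcol (dotvC (col j A) (col j0 A)) -/(sg j).
  by have := hsg j; rewrite expr2 => ->; ring.
set s := \sum_j sg j * gamma j 0.
have hbs : beta = s *: col j0 A.
  rewrite -hx hq mulmx_cols /s scaler_suml; apply: eq_bigr => j _.
  by rewrite hcj scalerA mulrC.
have hs2 : s ^+ 2 = 1.
  by move: hbeta1; rewrite hbs dotvZl dotvZr hcol mulr1 -expr2.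
have hsg1 : forall j, sg j = 1 \/ sg j = -1.
  by move=> j; have := hsg j; move/eqP; rewrite sqrf_eq1 => /orP [/eqP ->|/eqP ->]; [left|right].
move/eqP: hs2; rewrite sqrf_eq1 => /orP [/eqP hs1|/eqP hs1].
  by exists sg; split.
exists (fun j => - sg j); split.
  by move=> j; case: (hsg1 j) => ->; [right|left]; rewrite ?opprK.
have -> : \sum_(i < n) - sg i * gamma i 0 = - s by rewrite /s -sumrN; apply: eq_bigr => j _; rewrite mulNr.
by rewrite hs1 opprK.
Qed.

Theorem proposition2 (R : realType) (n m : nat) (hn : (2 <= n)%N) (hm : (2 <= m)%N)
  (alpha : R) (beta : 'cV[R]_m) (gamma : 'cV[R]_n)
  (halpha : 0 < alpha) (hbeta : norm2 beta = 1) (hgamma : forall i, 0 < gamma i 0)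
  (A : 'M[R]_(m, n)) (q : 'cV[R]_n)
  (hmax : is_maximizer alpha beta gamma A q) :
  let x := A *m q in
  (* (i) *)
  (rfun gamma <= 1 <= Rfun gamma ->
     q = gamma /\ x = beta /\
     (~ (exists sigma : 'I_n -> R,
           (forall i, sigma i = 1 \/ sigma i = -1) /\
           \sum_(i < n) sigma i * gamma i 0 = 1) ->
        (2 <= \rank A)%N)) /\
  (* (ii) *)
  (Rfun gamma <= 1 ->
     (forall i, q i 0 = gamma i 0 + alpha * (1 - Rfun gamma) / (1 + n%:R * alpha)) /\
     x = Rfun q *: beta /\
     A = \matrix_(k < m, j < n) beta k 0) /\
  (* (iii) *)
  (1 <= rfun gamma -> forall i : 'I_n, gamma i 0 = norminf gamma ->
     q i 0 = gamma i 0 - alpha * (rfun gamma - 1) / (1 + n%:R * alpha) /\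
     (forall j, j != i -> q j 0 = gamma j 0 + alpha * (rfun gamma - 1) / (1 + n%:R * alpha)) /\
     x = rfun q *: beta /\
     A = \matrix_(k < m, j < n) (if j == i then beta k 0 else - beta k 0)).
Proof.
move=> x.
have hb1 := norm2_dot hbeta.
rewrite /x.
split; first exact: (part1 hn hm halpha hb1 hgamma hmax).
split; first exact: (part2 halpha hb1 hgamma hmax).
move=> hr i hi; exact: (part3 hn halpha hb1 hgamma hmax hr hi).
Qed.
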